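(* Let $\mathbf P=(P,\leq,{}',0,1)$ be an orthogonal lub-complete poset and $\rightarrow\in\{\rightarrow_C,\rightarrow_K,\rightarrow_N,\rightarrow_S,\rightarrow_D\}$. Then the following conditions are equivalent: (i) (MPO) $x\leq y$ and $x\rightarrow y\leq u\rightarrow v$ imply $u\leq v$, for all $x,y,u,v\in P$. (ii) (OP) $x\leq y$ if and only if $x\rightarrow y=1$, for all $x,y\in P$.
   Context: $(P,\leq,{}',0,1)$ is a bounded poset with an antitone involution ${}'$; orthogonal means $x\leq y'$ implies $x\vee y$ exists; lub-complete means for every lower bound $x$ of a finite subset $M$ there is a maximal lower bound of $M$ above $x$. For $A\subseteq P$, $L(A)$, $U(A)$ are the lower and upper cones, $\mathrm{Max}\,A$, $\mathrm{Min}\,A$ the sets of maximal and minimal elements; joins/meets with sets are elementwise. The implications (operators $P^2\to 2^P$) are: $x\rightarrow_C y:=\mathrm{Min}\,U(x',y)$; $x\rightarrow_K y:=\mathrm{Max}\,L(x',y)\vee \mathrm{Max}\,L(x',y')\vee (x\wedge \mathrm{Min}\,U(x',y))$; $x\rightarrow_N y:=y'\rightarrow_K x'$; $x\rightarrow_S y:=x'\vee \mathrm{Max}\,L(x,y)$; $x\rightarrow_D y:=y'\rightarrow_S x'=y\vee \mathrm{Max}\,L(x',y')$. For sets, $A\leq B$ means $a\leq b$ for all $a\in A,b\in B$; ''$=1$'' means equal to $\{1\}$. *)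

(* Defs.v *)
From Stdlib Require Import List.

Record bposet_inv := BPosetInv {
  car :> Type;
  le : car -> car -> Prop;
  cmp : car -> car;
  zero : car;
  one : car;
  le_refl : forall x, le x x;
  le_antisym : forall x y, le x y -> le y x -> x = y;
  le_trans : forall x y z, le x y -> le y z -> le x z;
  le0x : forall x, le zero x;
  lex1 : forall x, le x one;
  cmpK : forall x, cmp (cmp x) = x;
  cmp_antitone : forall x y, le x y -> le (cmp y) (cmp x)
}.

Arguments le {b} _ _.
Arguments cmp {b} _.
Arguments zero {b}.
Arguments one {b}.

Section Defs.
Variable P : bposet_inv.

Definition pset := P -> Prop.

Definition is_join (x y z : P) : Prop :=
  le x z /\ le y z /\ forall w, le x w -> le y w -> le z w.
Definition is_meet (x y z : P) : Prop :=
  le z x /\ le z y /\ forall w, le w x -> le w y -> le w z.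

Definition Lc (A : pset) : pset := fun z => forall a, A a -> le z a.
Definition Uc (A : pset) : pset := fun z => forall a, A a -> le a z.
Definition pair (x y : P) : pset := fun z => z = x \/ z = y.
Definition sing (x : P) : pset := fun z => z = x.

Definition Maxs (A : pset) : pset :=
  fun z => A z /\ forall w, A w -> le z w -> w = z.
Definition Mins (A : pset) : pset :=
  fun z => A z /\ forall w, A w -> le w z -> w = z.

Definition setjoin (A B : pset) : pset :=
  fun z => exists a b, A a /\ B b /\ is_join a b z.
Definition setmeet (A B : pset) : pset :=
  fun z => exists a b, A a /\ B b /\ is_meet a b z.

Definition setle (A B : pset) : Prop :=
  forall a b, A a -> B b -> le a b.
Definition is_one (A : pset) : Prop := forall z, A z <-> z = one.

Definition orthogonal : Prop :=
  forall x y : P, le x (cmp y) -> exists z, is_join x y z.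

Definition lub_complete : Prop :=
  forall (M : list P) (x : P), Lc (fun m => In m M) x ->
    exists w, Maxs (Lc (fun m => In m M)) w /\ le x w.

Inductive impl_kind := ImpC | ImpK | ImpN | ImpS | ImpD.

Definition implC (x y : P) : pset := Mins (Uc (pair (cmp x) y)).
Definition implK (x y : P) : pset :=
  setjoin (setjoin (Maxs (Lc (pair (cmp x) y))) (Maxs (Lc (pair (cmp x) (cmp y)))))
          (setmeet (sing x) (Mins (Uc (pair (cmp x) y)))).
Definition implN (x y : P) : pset := implK (cmp y) (cmp x).
Definition implS (x y : P) : pset := setjoin (sing (cmp x)) (Maxs (Lc (pair x y))).
Definition implD (x y : P) : pset := setjoin (sing y) (Maxs (Lc (pair (cmp x) (cmp y)))).

Definition impl (k : impl_kind) : P -> P -> pset :=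
  match k with
  | ImpC => implC | ImpK => implK | ImpN => implN | ImpS => implS | ImpD => implD
  end.

Definition MPO (k : impl_kind) : Prop :=
  forall x y u v : P, le x y -> setle (impl k x y) (impl k u v) -> le u v.
Definition OP (k : impl_kind) : Prop :=
  forall x y : P, le x y <-> is_one (impl k x y).

End Defs.

(* Main.v *)
Require Import Defs.
From Stdlib Require Import List.

Lemma cmp_le_inv (P : bposet_inv) (a b : P) : le (cmp a) (cmp b) -> le b a.
Proof. intro H. rewrite <- (cmpK P a), <- (cmpK P b). apply cmp_antitone; exact H. Qed.

Lemma cmp0 (P : bposet_inv) : @cmp P zero = one.
Proof.
  apply le_antisym. apply lex1.
  apply cmp_le_inv. rewrite cmpK. apply le0x.
Qed.

Lemma cmp1 (P : bposet_inv) : @cmp P one = zero.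
Proof. rewrite <- (cmp0 P), cmpK. reflexivity. Qed.

Lemma le_cmp_l (P : bposet_inv) (a b : P) : le a (cmp b) -> le b (cmp a).
Proof. intro H. apply cmp_antitone in H. rewrite cmpK in H. exact H. Qed.

Lemma le_cmp_r (P : bposet_inv) (a b : P) : le (cmp a) b -> le (cmp b) a.
Proof. intro H. apply cmp_antitone in H. rewrite cmpK in H. exact H. Qed.

Lemma Lc_pair (P : bposet_inv) (a b z : P) : Lc P (pair P a b) z <-> le z a /\ le z b.
Proof.
  unfold Lc, pair. split.
  - intro H. split; apply H; auto.
  - intros [H1 H2] w [-> | ->]; auto.
Qed.

Lemma Uc_pair (P : bposet_inv) (a b z : P) : Uc P (pair P a b) z <-> le a z /\ le b z.
Proof.
  unfold Uc, pair. split.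
  - intro H. split; apply H; auto.
  - intros [H1 H2] w [-> | ->]; auto.
Qed.

Lemma maxL_ex (P : bposet_inv) : lub_complete P -> forall a b : P,
  exists m, Maxs P (Lc P (pair P a b)) m.
Proof.
  intros HL a b.
  destruct (HL (a :: b :: nil) zero) as [w [[Hw Hmax] _]].
  { intros m _. apply le0x. }
  exists w. split.
  - apply Lc_pair. split; apply Hw; simpl; auto.
  - intros v Hv Hle. apply Lc_pair in Hv. destruct Hv as [Hv1 Hv2].
    apply Hmax; auto.
    intros m Hm. simpl in Hm. destruct Hm as [<- | [<- | []]]; auto.
Qed.

Lemma minU_ex (P : bposet_inv) : lub_complete P -> forall a b : P,
  exists c, Mins P (Uc P (pair P a b)) c.
Proof.
  intros HL a b. destruct (maxL_ex P HL (cmp a) (cmp b)) as [m [Hm Hmax]].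
  apply Lc_pair in Hm. destruct Hm as [H1 H2].
  exists (cmp m). split.
  - apply Uc_pair. split; apply le_cmp_l; auto.
  - intros w Hw Hle. apply Uc_pair in Hw. destruct Hw as [W1 W2].
    rewrite <- (cmpK P w). f_equal.
    apply Hmax.
    + apply Lc_pair. split; apply cmp_antitone; auto.
    + apply le_cmp_l. exact Hle.
Qed.

Lemma join_ex (P : bposet_inv) : orthogonal P -> forall a b : P,
  le a (cmp b) -> exists z, is_join P a b z.
Proof. intros HO a b H. apply HO; auto. Qed.

Lemma meet_ex (P : bposet_inv) : orthogonal P -> forall a b : P,
  le (cmp a) b -> exists z, is_meet P a b z.
Proof.
  intros HO a b H.
  destruct (HO (cmp a) (cmp b)) as [j [J1 [J2 J3]]].
  { rewrite cmpK. exact H. }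
  exists (cmp j). split; [|split].
  - apply le_cmp_r. exact J1.
  - apply le_cmp_r. exact J2.
  - intros w W1 W2. apply le_cmp_l. apply J3; apply cmp_antitone; auto.
Qed.

Lemma join_le_r (P : bposet_inv) (a b z : P) : is_join P a b z -> le a b -> z = b.
Proof. intros [J1 [J2 J3]] H. apply le_antisym; auto. apply J3; auto. apply le_refl. Qed.

Lemma join_le_l (P : bposet_inv) (a b z : P) : is_join P a b z -> le b a -> z = a.
Proof. intros [J1 [J2 J3]] H. apply le_antisym; auto. apply J3; auto. apply le_refl. Qed.

Lemma meet_le_l (P : bposet_inv) (a b z : P) : is_meet P a b z -> le a b -> z = a.
Proof. intros [J1 [J2 J3]] H. apply le_antisym; auto. apply J3; auto. apply le_refl. Qed.

Lemma meet_le_r (P : bposet_inv) (a b z : P) : is_meet P a b z -> le b a -> z = b.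
Proof. intros [J1 [J2 J3]] H. apply le_antisym; auto. apply J3; auto. apply le_refl. Qed.

Lemma maxL_le_l (P : bposet_inv) (a b m : P) : Maxs P (Lc P (pair P a b)) m -> le a b -> m = a.
Proof.
  intros [Hm Hmax] H. apply Lc_pair in Hm. symmetry. apply Hmax.
  - apply Lc_pair. split; auto. apply le_refl.
  - apply Hm.
Qed.

Lemma maxL_le_r (P : bposet_inv) (a b m : P) : Maxs P (Lc P (pair P a b)) m -> le b a -> m = b.
Proof.
  intros [Hm Hmax] H. apply Lc_pair in Hm. symmetry. apply Hmax.
  - apply Lc_pair. split; auto. apply le_refl.
  - apply Hm.
Qed.

Lemma minU_le_r (P : bposet_inv) (a b c : P) : Mins P (Uc P (pair P a b)) c -> le a b -> c = b.
Proof.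
  intros [Hc Hmin] H. apply Uc_pair in Hc. symmetry. apply Hmin.
  - apply Uc_pair. split; auto. apply le_refl.
  - apply Hc.
Qed.

Lemma le_trans3 (P : bposet_inv) (a b c d : P) : le a b -> le b c -> le c d -> le a d.
Proof. intros. eapply le_trans; [eapply le_trans|]; eauto. Qed.

Lemma implK_ne (P : bposet_inv) : orthogonal P -> lub_complete P -> forall u v : P,
  exists z, implK P u v z.
Proof.
  intros HO HL u v.
  destruct (maxL_ex P HL (cmp u) v) as [a Ha].
  destruct (maxL_ex P HL (cmp u) (cmp v)) as [b Hb].
  destruct (minU_ex P HL (cmp u) v) as [c Hc].
  pose proof Ha as [Ha' _]. pose proof Hb as [Hb' _]. pose proof Hc as [Hc' _].
  apply Lc_pair in Ha'. apply Lc_pair in Hb'. apply Uc_pair in Hc'.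
  destruct (join_ex P HO a b) as [j Hj].
  { eapply le_trans. apply Ha'. apply le_cmp_l. apply Hb'. }
  destruct (meet_ex P HO u c) as [d Hd].
  { apply Hc'. }
  destruct (join_ex P HO j d) as [z Hz].
  { destruct Hd as [D1 _]. destruct Hj as [_ [_ J3]].
    eapply le_trans. 2: apply cmp_antitone; exact D1.
    apply J3; [apply Ha' | apply Hb']. }
  exists z. exists j, d. split; [|split; auto].
  - exists a, b. auto.
  - exists u, c. split; [reflexivity|]. auto.
Qed.

Lemma impl_ne (P : bposet_inv) (k : impl_kind) : orthogonal P -> lub_complete P ->
  forall u v : P, exists z, impl P k u v z.
Proof.
  intros HO HL u v. destruct k; simpl.
  - apply minU_ex; auto.
  - apply implK_ne; auto.
  - apply implK_ne; auto.
  - destruct (maxL_ex P HL u v) as [m Hm].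
    pose proof Hm as [Hm' _]. apply Lc_pair in Hm'.
    destruct (join_ex P HO (cmp u) m) as [z Hz].
    { apply cmp_antitone. apply Hm'. }
    exists z, (cmp u), m. split; [reflexivity|]. auto.
  - destruct (maxL_ex P HL (cmp u) (cmp v)) as [m Hm].
    pose proof Hm as [Hm' _]. apply Lc_pair in Hm'.
    destruct (join_ex P HO v m) as [z Hz].
    { apply le_cmp_l. apply Hm'. }
    exists z, v, m. split; [reflexivity|]. auto.
Qed.

Lemma implK_P (P : bposet_inv) (x y z : P) : orthogonal P -> le x y -> implK P x y z -> le (cmp z) z.
Proof.
  intros HO Hxy [j [d [[a [b [Ha [Hb Hj]]]] [[x0 [c [Hx0 [Hc Hd]]]] Hz]]]].
  unfold sing in Hx0. subst x0.
  assert (Eb : b = cmp y).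
  { apply (maxL_le_r P _ _ _ Hb). apply cmp_antitone; auto. }
  subst b.
  pose proof Hc as [Hc' _]. apply Uc_pair in Hc'.
  assert (Ed : d = x).
  { apply (meet_le_l P _ _ _ Hd). eapply le_trans; eauto. apply Hc'. }
  subst d.
  destruct Hz as [Z1 [Z2 Z3]]. destruct Hj as [J1 [J2 J3]].
  assert (Haz : le a z) by (eapply le_trans; eauto).
  assert (Hyz : le (cmp y) z) by (eapply le_trans; eauto).
  destruct Ha as [Ha Hmax]. apply Lc_pair in Ha.
  assert (T1 : le (cmp z) (cmp x)) by (apply cmp_antitone; auto).
  assert (T2 : le (cmp z) y) by (apply le_cmp_r; auto).
  destruct (join_ex P HO a (cmp z)) as [s [S1 [S2 S3]]].
  { rewrite cmpK. auto. }
  assert (Es : s = a).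
  { apply Hmax; auto. apply Lc_pair. split; apply S3; tauto. }
  subst s. eapply le_trans; eauto.
Qed.

Lemma impl_P (P : bposet_inv) (k : impl_kind) (x y z : P) : orthogonal P -> le x y ->
  impl P k x y z -> le (cmp z) z.
Proof.
  intros HO Hxy Hz. destruct k; simpl in Hz.
  - destruct Hz as [Hz _]. apply Uc_pair in Hz. destruct Hz as [Z1 Z2].
    apply le_cmp_r in Z1. eapply le_trans3; eauto.
  - eapply implK_P; eauto.
  - apply (implK_P P (cmp y) (cmp x)); auto. apply cmp_antitone; auto.
  - destruct Hz as [a [m [Ha [Hm Hz]]]]. unfold sing in Ha. subst a.
    assert (m = x) by (apply (maxL_le_l P _ _ _ Hm); auto). subst m.
    destruct Hz as [Z1 [Z2 _]]. apply le_cmp_r in Z1. eapply le_trans; eauto.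
  - destruct Hz as [a [m [Ha [Hm Hz]]]]. unfold sing in Ha. subst a.
    assert (m = cmp y) by (apply (maxL_le_r P _ _ _ Hm); apply cmp_antitone; auto). subst m.
    destruct Hz as [Z1 [Z2 _]]. apply le_cmp_r in Z2. eapply le_trans; eauto.
Qed.

Lemma implK_self (P : bposet_inv) (z w : P) : le (cmp z) z -> implK P (cmp z) z w -> w = z.
Proof.
  intros Hz [j [d [[a [b [Ha [Hb Hj]]]] [[x0 [c [Hx0 [Hc Hd]]]] Hw]]]].
  unfold sing in Hx0. subst x0. rewrite cmpK in Ha, Hb, Hc.
  assert (a = z) by (apply (maxL_le_l P _ _ _ Ha); apply le_refl). subst a.
  assert (b = cmp z) by (apply (maxL_le_r P _ _ _ Hb); auto). subst b.
  assert (j = z) by (apply (join_le_l P _ _ _ Hj); auto). subst j.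
  assert (c = z) by (apply (minU_le_r P _ _ _ Hc); apply le_refl). subst c.
  assert (d = cmp z) by (apply (meet_le_l P _ _ _ Hd); auto). subst d.
  apply (join_le_l P _ _ _ Hw); auto.
Qed.

Lemma implK_one (P : bposet_inv) (z w : P) : implK P one z w -> w = z.
Proof.
  intros [j [d [[a [b [Ha [Hb Hj]]]] [[x0 [c [Hx0 [Hc Hd]]]] Hw]]]].
  unfold sing in Hx0. subst x0. rewrite cmp1 in Ha, Hb, Hc.
  assert (a = zero) by (apply (maxL_le_l P _ _ _ Ha); apply le0x). subst a.
  assert (b = zero) by (apply (maxL_le_l P _ _ _ Hb); apply le0x). subst b.
  assert (j = zero) by (apply (join_le_l P _ _ _ Hj); apply le_refl). subst j.
  assert (c = z) by (apply (minU_le_r P _ _ _ Hc); apply le0x). subst c.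
  assert (d = z) by (apply (meet_le_r P _ _ _ Hd); apply lex1). subst d.
  apply (join_le_r P _ _ _ Hw); apply le0x.
Qed.

Lemma MPO_Q (P : bposet_inv) (k : impl_kind) : MPO P k -> forall z : P, le (cmp z) z -> z = one.
Proof.
  intros HM z Hz. destruct k.
  - assert (H : le one z).
    { apply (HM (cmp z) z one z Hz). intros a b Ha Hb. cbv [impl implC implS implD] in Ha, Hb.
      rewrite cmpK in Ha. rewrite cmp1 in Hb.
      apply (minU_le_r P) in Ha; [|apply le_refl].
      apply (minU_le_r P) in Hb; [|apply le0x]. subst. apply le_refl. }
    apply le_antisym; auto. apply lex1.
  - assert (H : le one z).
    { apply (HM (cmp z) z one z Hz). intros a b Ha Hb. cbv [impl implC implS implD] in Ha, Hb.
      apply implK_self in Ha; auto. apply implK_one in Hb. subst. apply le_refl. }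
    apply le_antisym; auto. apply lex1.
  - assert (H : le (cmp z) zero).
    { apply (HM (cmp z) z (cmp z) zero Hz). intros a b Ha Hb. cbv [impl implC implS implD] in Ha, Hb.
      unfold implN in Ha, Hb. rewrite cmpK in Ha, Hb. rewrite cmp0 in Hb.
      apply implK_self in Ha; auto. apply implK_one in Hb. subst. apply le_refl. }
    assert (cmp z = zero) by (apply le_antisym; auto; apply le0x).
    rewrite <- (cmpK P z), H0. apply cmp0.
  - assert (H : le one z).
    { apply (HM (cmp z) z one z Hz). intros a b Ha Hb. cbv [impl implC implS implD] in Ha, Hb.
      destruct Ha as [a1 [m [Ha1 [Hm Ha]]]]. unfold sing in Ha1. subst a1.
      destruct Hb as [b1 [n [Hb1 [Hn Hb]]]]. unfold sing in Hb1. subst b1.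
      rewrite cmpK in Ha. rewrite cmp1 in Hb.
      assert (m = cmp z) by (apply (maxL_le_l P _ _ _ Hm); auto). subst m.
      assert (n = z) by (apply (maxL_le_r P _ _ _ Hn); apply lex1). subst n.
      apply (join_le_l P) in Ha; auto. apply (join_le_r P) in Hb; [|apply le0x].
      subst. apply le_refl. }
    apply le_antisym; auto. apply lex1.
  - assert (H : le one z).
    { apply (HM (cmp z) z one z Hz). intros a b Ha Hb. cbv [impl implC implS implD] in Ha, Hb.
      destruct Ha as [a1 [m [Ha1 [Hm Ha]]]]. unfold sing in Ha1. subst a1.
      destruct Hb as [b1 [n [Hb1 [Hn Hb]]]]. unfold sing in Hb1. subst b1.
      rewrite cmpK in Hm. rewrite cmp1 in Hn.
      assert (m = cmp z) by (apply (maxL_le_r P _ _ _ Hm); auto). subst m.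
      assert (n = zero) by (apply (maxL_le_l P _ _ _ Hn); apply le0x). subst n.
      apply (join_le_l P) in Ha; auto. apply (join_le_l P) in Hb; [|apply le0x].
      subst. apply le_refl. }
    apply le_antisym; auto. apply lex1.
Qed.

Theorem theorem10 (P : bposet_inv) (k : impl_kind) :
  orthogonal P -> lub_complete P -> (MPO P k <-> OP P k).
Proof.
  intros HO HL. split.
  - intros HM x y. split.
    + intros Hxy z. split.
      * intro Hz. apply (MPO_Q P k HM). eapply impl_P; eauto.
      * intros ->. destruct (impl_ne P k HO HL x y) as [z Hz].
        assert (Ez : z = one) by (apply (MPO_Q P k HM); eapply impl_P; eauto).
        subst; auto.
    + intros H1. apply (HM zero zero x y (le_refl P zero)).
      intros a b _ Hb. apply H1 in Hb. subst. apply lex1.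
  - intros HOP x y u v Hxy Hle.
    apply HOP in Hxy.
    assert (Hall : forall b, impl P k u v b -> b = one).
    { intros b Hb. apply le_antisym. apply lex1. apply Hle; auto. apply Hxy. reflexivity. }
    apply HOP. intro w. split.
    + apply Hall.
    + intros ->. destruct (impl_ne P k HO HL u v) as [z Hz].
      pose proof Hz as Hz'. apply Hall in Hz'. subst. auto.
Qed.
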